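(* Let $\mathcal P$ be a 2-reflex orthostack made of three bricks with canonical contact rectangles and signature $\sqcap_i\sqcup_j$ for some types $i,j\in\{1,2,3,4\}$. Then $\mathcal P$ is guarded by a single vertical closed face guard (indeed, by any vertical face of the middle brick).
   Context: A 2-reflex orthostack is an orthogonal polyhedron with no reflex edge parallel to the vertical ($z$) axis all of whose horizontal cross-sections are simply connected; it is a stack of bricks $B_t=R_t\times[z_{t-1},z_t]$, $t=1,\dots,k$ (bottom to top), $z_0<\dots<z_k$, each $R_t$ an axis-parallel rectangle, $R_t\ne R_{t+1}$. The contact rectangle between $B_t$ and $B_{t+1}$ is $(R_t\cap R_{t+1})\times\{z_t\}$; it is canonical if one of $R_t,R_{t+1}$ is strictly contained in the other and their set difference is connected. The type of a canonical contact rectangle is the number $i\in\{1,2,3,4\}$ of sides of the smaller rectangle not contained in the boundary of the larger one. The contact is denoted $\sqcup_i$ if $R_t\subsetneq R_{t+1}$ and $\sqcap_i$ if $R_{t+1}\subsetneq R_t$. The signature is the sequence of these symbols for $t=1,\dots,k-1$, read bottom to top. A point $x$ is visible to $y$ if segment $xy$ does not meet the exterior of the polyhedron; a closed face guard is a face including its boundary; it guards the polyhedron if every point is visible from some point of it. A face is vertical if parallel to the $z$-axis. *)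

(* Defs.v *)
From Stdlib Require Import Reals.
Open Scope R_scope.

Definition pt2 : Type := (R * R)%type.
Definition pt3 : Type := (R * R * R)%type.

Record rect : Type := mkRect {
  xl : R; xh : R; yl : R; yh : R;
  xlt : xl < xh; ylt : yl < yh }.

Definition in_rect (r : rect) (p : pt2) : Prop :=
  xl r <= fst p <= xh r /\ yl r <= snd p <= yh r.

Definition rect_strict_sub (r s : rect) : Prop :=
  (forall p, in_rect r p -> in_rect s p) /\ exists p, in_rect s p /\ ~ in_rect r p.

Definition open2 (U : pt2 -> Prop) : Prop :=
  forall p, U p -> exists e, 0 < e /\
    forall q, Rabs (fst q - fst p) < e -> Rabs (snd q - snd p) < e -> U q.

Definition connected2 (S : pt2 -> Prop) : Prop :=
  ~ exists U V : pt2 -> Prop, open2 U /\ open2 V /\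
      (forall p, S p -> U p \/ V p) /\
      (exists p, S p /\ U p) /\ (exists p, S p /\ V p) /\
      (forall p, S p -> U p -> V p -> False).

Definition canonical_pair (small big : rect) : Prop :=
  rect_strict_sub small big /\
  connected2 (fun p => in_rect big p /\ ~ in_rect small p).

(** Contact symbols: sqcap (R_{t+1} strictly inside R_t) and sqcup
    (R_t strictly inside R_{t+1}), both canonical. *)
Definition sqcap_contact (Rt Rt1 : rect) : Prop := canonical_pair Rt1 Rt.
Definition sqcup_contact (Rt Rt1 : rect) : Prop := canonical_pair Rt Rt1.

Definition in_brick (r : rect) (zlo zhi : R) (p : pt3) : Prop :=
  in_rect r (fst (fst p), snd (fst p)) /\ zlo <= snd p <= zhi.

Definition stack3 (R1 R2 R3 : rect) (z0 z1 z2 z3 : R) (p : pt3) : Prop :=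
  in_brick R1 z0 z1 p \/ in_brick R2 z1 z2 p \/ in_brick R3 z2 z3 p.

Definition seg_pt (x y : pt3) (t : R) : pt3 :=
  (fst (fst x) + t * (fst (fst y) - fst (fst x)),
   snd (fst x) + t * (snd (fst y) - snd (fst x)),
   snd x + t * (snd y - snd x)).

Definition visible (P : pt3 -> Prop) (x y : pt3) : Prop :=
  forall t, 0 <= t <= 1 -> P (seg_pt x y t).

Definition guards (P : pt3 -> Prop) (G : pt3 -> Prop) : Prop :=
  forall x, P x -> exists g, G g /\ visible P x g.

Inductive side : Type := West | East | South | North.

Definition brick_vface (r : rect) (zlo zhi : R) (s : side) (p : pt3) : Prop :=
  in_brick r zlo zhi p /\
  match s with
  | West => fst (fst p) = xl r
  | East => fst (fst p) = xh r
  | South => snd (fst p) = yl r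
  | North => snd (fst p) = yh r
  end.

(* Main.v *)
Require Import Defs.
From Stdlib Require Import Reals Lra Psatz.
Open Scope R_scope.

Lemma conv_in (lo hi a b t : R) :
  lo <= a <= hi -> lo <= b <= hi -> 0 <= t <= 1 -> lo <= a + t * (b - a) <= hi.
Proof. intros; split; nra. Qed.

Lemma brick_conv (r : rect) lo hi (x g : pt3) t :
  in_brick r lo hi x -> in_brick r lo hi g -> 0 <= t <= 1 ->
  in_brick r lo hi (seg_pt x g t).
Proof.
  destruct x as [[x1 x2] x3], g as [[g1 g2] g3].
  unfold in_brick, in_rect, seg_pt; simpl.
  intros [[A B] C] [[D E] F] T.
  pose proof (conv_in _ _ x1 g1 t A D T).
  pose proof (conv_in _ _ x2 g2 t B E T).
  pose proof (conv_in _ _ x3 g3 t C F T).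
  tauto.
Qed.

Theorem mainTheorem8 :
  forall (R1 R2 R3 : rect) (z0 z1 z2 z3 : R),
    z0 < z1 -> z1 < z2 -> z2 < z3 ->
    sqcap_contact R1 R2 -> sqcup_contact R2 R3 ->
    forall s : side, guards (stack3 R1 R2 R3 z0 z1 z2 z3) (brick_vface R2 z1 z2 s).
Proof.
  intros R1 R2 R3 z0 z1 z2 z3 H01 H12 H23 [[S1 _] _] [[S3 _] _] s x Hx.
  set (c := match s with West | South => (xl R2, yl R2) | _ => (xh R2, yh R2) end).
  assert (Hc : in_rect R2 c).
  { pose proof (xlt R2); pose proof (ylt R2).
    unfold c, in_rect; destruct s; simpl; lra. }
  assert (Hf : forall z, z1 <= z <= z2 -> brick_vface R2 z1 z2 s (fst c, snd c, z)).
  { intros z Hz. unfold brick_vface, in_brick; simpl. split.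
    - split; [exact Hc | lra].
    - unfold c; destruct s; reflexivity. }
  destruct Hx as [Hx|[Hx|Hx]].
  - exists (fst c, snd c, z1). split; [apply Hf; lra|].
    intros t Ht. left. apply brick_conv; auto.
    split; [apply S1; exact Hc | simpl; lra].
  - exists (fst c, snd c, z1). split; [apply Hf; lra|].
    intros t Ht. right; left. apply brick_conv; auto.
    split; [exact Hc | simpl; lra].
  - exists (fst c, snd c, z2). split; [apply Hf; lra|].
    intros t Ht. right; right. apply brick_conv; auto.
    split; [apply S3; exact Hc | simpl; lra].
Qed.
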